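(* Let $f:\{0,1\}^{10}\to\{0,1\}$ be fully sensitive at $0$ with $d(f)\le 4$. Then the symmetrization polynomial of $f$ is \[ \tilde{p}(x) = -\frac{x^{4}}{144}+\frac{5 x^{3}}{36}-\frac{125 x^{2}}{144}+\frac{125 x}{72}. \]
   Context: $d(f)$ is the degree of the unique multilinear real polynomial $q$ agreeing with $f$ on $\{0,1\}^{10}$. $f$ is fully sensitive at $0$ if $f(0)=0$ and $f(e_i)=1$ for every unit vector $e_i$. The symmetrization polynomial of $f$ is the univariate real polynomial $p$ of degree at most $d(f)$ with $p(x_1+\dots+x_{10})=\frac{1}{10!}\sum_{\pi\in S_{10}} q(\pi(x))$ for all $x\in\{0,1\}^{10}$ ($\pi(x)$ permutes coordinates); equivalently $p(k)$ is the fraction of inputs of Hamming weight $k$ on which $f=1$, for $k=0,\dots,10$. *)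

(* Defs.v *)
From HB Require Import structures.
From mathcomp Require Import all_boot all_order all_algebra.
Set Implicit Arguments. Unset Strict Implicit. Unset Printing Implicit Defensive.
Import Order.TTheory GRing.Theory Num.Theory.
Local Open Scope ring_scope.

Definition cube := {ffun 'I_10 -> bool}.
Definition boolfun := cube -> bool.

Definition hweight (x : cube) : nat := #|[set i | x i]|.

Definition zero_pt : cube := [ffun => false].
Definition unit_pt (i : 'I_10) : cube := [ffun j => j == i].

Definition fully_sensitive_at0 (f : boolfun) : Prop :=
  f zero_pt = false /\ forall i : 'I_10, f (unit_pt i) = true.

Definition ml_eval (R : realFieldType) (c : {set 'I_10} -> R) (x : cube) : R :=
  \sum_(S : {set 'I_10}) c S * \prod_(i in S) ((x i)%:R : R).

(* d is the degree d(f) of the (unique) multilinear real polynomial q agreeing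
   with f on {0,1}^10: q has coefficients c, agrees with f, and d is the
   largest size of a monomial with non-zero coefficient. *)
Local Open Scope nat_scope.
Definition ml_degree (R : realFieldType) (f : boolfun) (d : nat) : Prop :=
  exists c : {set 'I_10} -> R,
    (forall x : cube, ml_eval c x = ((f x)%:R : R)) /\
    d = \max_(S : {set 'I_10} | c S != 0%R) #|S|.

Local Open Scope ring_scope.
Definition wfrac (R : realFieldType) (f : boolfun) (k : nat) : R :=
  (#|[set x : cube | (hweight x == k) && f x]|%:R) /
  (#|[set x : cube | hweight x == k]|%:R).

Definition symm_poly_spec (R : realFieldType) (f : boolfun) (d : nat)
    (p : {poly R}) : Prop :=
  (size p <= d.+1)%N /\ forall k : 'I_11, p.[(k : nat)%:R] = wfrac R f k.

Definition ptilde (R : realFieldType) : {poly R} :=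
  (- (1 / 144)) *: 'X^4 + (5 / 36) *: 'X^3 - (125 / 144) *: 'X^2
  + (125 / 72) *: 'X.

(* Main.v *)
Require Import Defs.
From HB Require Import structures.
From mathcomp Require Import all_boot all_order all_algebra.
From mathcomp Require Import ring lra.
Import Order.TTheory GRing.Theory Num.Theory.
Local Open Scope ring_scope.

Definition phi (x : cube) : {set 'I_10} := [set i | x i].
Definition psi (T : {set 'I_10}) : cube := [ffun i => i \in T].

Lemma phiK : cancel phi psi.
Proof. by move=> x; apply/ffunP=> i; rewrite ffunE inE. Qed.
Lemma psiK : cancel psi phi.
Proof. by move=> T; apply/setP=> i; rewrite inE ffunE. Qed.

Lemma sum_cube (R : realFieldType) (P : pred {set 'I_10}) (F : {set 'I_10} -> R) :
  \sum_(x : cube | P (phi x)) F (phi x) = \sum_(T | P T) F T.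
Proof.
rewrite (reindex psi) /=; last by apply: onW_bij; exact: (Bijective psiK phiK).
by apply: eq_big => T; rewrite psiK.
Qed.

Lemma card_sum (R : realFieldType) (T : finType) (P Q : pred T) :
  (#|[set x | P x && Q x]|%:R : R) = \sum_(x | P x) ((Q x)%:R : R).
Proof.
rewrite -sum1_card natr_sum (eq_bigl (fun x => P x && Q x)); last by move=> x; rewrite inE.
rewrite big_mkcondr; apply: eq_bigr => x _; by case: (Q x).
Qed.

Lemma prod_ind (R : realFieldType) (x : cube) (S : {set 'I_10}) :
  \prod_(i in S) ((x i)%:R : R) = (S \subset phi x)%:R.
Proof.
case: (boolP (S \subset phi x)) => [/subsetP sub|/subsetPn [i iS nx]].
  by rewrite big1 // => i /sub; rewrite inE => ->.
rewrite (bigD1 i) //=; move: nx; rewrite inE => /negbTE ->; by rewrite mul0r.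
Qed.

Lemma card_le10 (T : {set 'I_10}) : (#|T| <= 10)%N.
Proof. by rewrite -[X in (_ <= X)%N]card_ord max_card. Qed.

Lemma D_eq k : #|[set x : cube | hweight x == k]| = 'C(10, k).
Proof.
rewrite -(card_imset _ (can_inj phiK)).
have -> : phi @: [set x : cube | hweight x == k] = [set T : {set 'I_10} | #|T| == k].
  apply/setP => T; rewrite inE; apply/imsetP/idP => [[x]|hT].
    by rewrite inE => hx ->.
  by exists (psi T); rewrite ?inE /hweight -/(phi _) psiK.
by rewrite card_draws card_ord.
Qed.

Lemma M_eq (S : {set 'I_10}) k : (k <= 10)%N ->
  #|[set T : {set 'I_10} | (#|T| == k) && (S \subset T)]| = 'C(10 - #|S|, 10 - k).
Proof.
move=> hk.
rewrite -(card_imset _ (@setC_inj _)).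
have -> : [set ~: T | T in [set T : {set 'I_10} | (#|T| == k) && (S \subset T)]]
   = [set U : {set 'I_10} | U \subset ~: S & (#|U| == 10 - k)%N].
  apply/setP => U; rewrite inE; apply/imsetP/idP.
    case=> T; rewrite inE => /andP [/eqP hT hS] ->.
    by rewrite setCS hS cardsCs setCK card_ord hT eqxx.
  move=> /andP [hU hc]; exists (~: U); last by rewrite setCK.
  by rewrite inE -setCS setCK hU cardsCs setCK card_ord (eqP hc) (subKn hk) eqxx.
have := cards_draws (~: S) (10 - k)%N; rewrite [#|~: S|]cardsCs setCK card_ord => <-.
apply: eq_card => U; by rewrite !inE.
Qed.

Lemma binid : forall s k, (s < 11)%N -> (k < 11)%N ->
  ('C(10 - s, 10 - k) * 'C(10, s) = 'C(k, s) * 'C(10, k))%N.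
Proof. by do 11!case=> //; do 12!case=> //. Qed.

Lemma size_pt (R : realFieldType) : (size (ptilde R) <= 5)%N.
Proof.
have hX : forall (b : R) n, (n <= 4)%N -> (size (b *: 'X^n) <= 5)%N.
  by move=> b n hn; apply: leq_trans (size_scale_leq _ _) _; rewrite size_polyXn ltnS.
rewrite /ptilde.
repeat (apply: leq_trans (size_polyD _ _) _; rewrite geq_max; apply/andP; split);
  rewrite ?size_polyN; try exact: hX.
by apply: leq_trans (size_scale_leq _ _) _; rewrite size_polyX.
Qed.

Theorem theorem11 (R : realFieldType) (f : boolfun) (d : nat) :
  ml_degree R f d -> (d <= 4)%N -> fully_sensitive_at0 f ->
  symm_poly_spec f d (ptilde R) /\
  (forall p : {poly R}, symm_poly_spec f d p -> p = ptilde R).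
Proof.
move=> [c [hc hd]] hd4 [f0 f1].
have cS0 : forall S : {set 'I_10}, (d < #|S|)%N -> c S = 0.
  move=> S hS; apply/eqP; apply: contraTT hS => hcS; rewrite -leqNgt hd.
  exact: (@leq_bigmax_cond _ (fun S : {set 'I_10} => c S != 0) (fun S : {set 'I_10} => #|S|) S hcS).
pose a (s : nat) : R := (\sum_(S : {set 'I_10} | #|S| == s) c S) / ('C(10, s))%:R.
have wf : forall k, (k <= 10)%N -> wfrac R f k = \sum_(s < 5) a s * ('C(k, s))%:R.
  move=> k hk.
  rewrite /wfrac D_eq.
  have -> : (#|[set x : cube | (hweight x == k) && f x]|%:R : R) =
     \sum_S c S * (#|[set T : {set 'I_10} | (#|T| == k) && (S \subset T)]|)%:R.
    rewrite card_sum.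
    transitivity (\sum_(x : cube | hweight x == k) \sum_S c S * ((S \subset phi x)%:R : R)).
      apply: eq_bigr => x _; rewrite -hc /ml_eval; apply: eq_bigr => S _; by rewrite prod_ind.
    rewrite exchange_big /=; apply: eq_bigr => S _.
    rewrite -mulr_sumr card_sum; congr (_ * _).
    rewrite (reindex psi) /=; last by apply: onW_bij; exact: (Bijective psiK phiK).
    by apply: eq_big => T; rewrite /hweight -/(phi _) psiK.
  rewrite big_distrl /=.
  transitivity (\sum_(S : {set 'I_10} | (#|S| < 5)%N) c S * ('C(k, #|S|))%:R / ('C(10, #|S|))%:R).
    rewrite [RHS]big_mkcond /=; apply: eq_bigr => S _.
    case: ifP => hS; last first.
      by rewrite cS0 ?mul0r //; apply: leq_ltn_trans hd4 _; rewrite ltnNge -ltnS hS.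
    rewrite M_eq // -!mulrA; congr (_ * _); apply/eqP.
    rewrite eqr_div ?pnatr_eq0 -?lt0n ?bin_gt0 ?card_le10 // -!natrM binid //.
    by rewrite ltnS card_le10.
  rewrite (partition_big (fun S : {set 'I_10} => (inord #|S| : 'I_5)) xpredT) //=.
  apply: eq_bigr => j _; rewrite /a mulrAC !mulr_suml.
  apply: eq_big => [S|S /andP [h /eqP hj]]; last by rewrite -hj inordK.
  apply/andP/eqP => [[h /eqP <-]|hS]; first by rewrite inordK.
  split; first by rewrite hS ltn_ord.
  by apply/eqP/val_inj; rewrite /= inordK hS ?ltn_ord.
have wb : forall k, (k <= 10)%N -> 0 <= wfrac R f k <= 1.
  move=> k hk; rewrite /wfrac D_eq.
  have hD : (0 < ('C(10,k))%:R :> R) by rewrite ltr0n bin_gt0.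
  rewrite divr_ge0 ?ler0n //= ler_pdivrMr // mul1r ler_nat -(D_eq k).
  by apply: subset_leq_card; apply/subsetP => x; rewrite !inE => /andP[].
have w0 : wfrac R f 0 = 0.
  rewrite /wfrac; have -> : [set x : cube | (hweight x == 0) && f x] = set0.
    apply/setP => x; rewrite !inE; case hx: (hweight x == 0) => //=.
    have h0 : phi x = set0 by apply: cards0_eq; exact/eqP.
    have -> : x = zero_pt by rewrite -(phiK x) h0; apply/ffunP => i; rewrite !ffunE inE.
    by rewrite f0.
  by rewrite cards0 mul0r.
have w1 : wfrac R f 1 = 1.
  rewrite /wfrac; have -> : [set x : cube | (hweight x == 1) && f x] = [set x : cube | hweight x == 1].
    apply/setP => x; rewrite !inE; case hx: (hweight x == 1) => //=.
    have /cards1P [i hi] : #|phi x| == 1 := hx.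
    have -> : x = unit_pt i by rewrite -(phiK x) hi; apply/ffunP => j; rewrite !ffunE inE.
    exact: f1.
  by rewrite divff // D_eq pnatr_eq0.
have ex : forall k, (k <= 10)%N -> wfrac R f k = a 0 + a 1 * ('C(k,1))%:R + a 2 * ('C(k,2))%:R + a 3 * ('C(k,3))%:R + a 4 * ('C(k,4))%:R.
  move=> k hk; rewrite wf // !big_ord_recl big_ord0 /= bin0 mulr1 addr0 !addrA //.
have e0 : wfrac R f 0 = a 0 + a 1 * 0%:R + a 2 * 0%:R + a 3 * 0%:R + a 4 * 0%:R by rewrite ex.
have /andP [l0 u0] := wb 0 isT.
have e1 : wfrac R f 1 = a 0 + a 1 * 1%:R + a 2 * 0%:R + a 3 * 0%:R + a 4 * 0%:R by rewrite ex.
have /andP [l1 u1] := wb 1 isT.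
have e2 : wfrac R f 2 = a 0 + a 1 * 2%:R + a 2 * 1%:R + a 3 * 0%:R + a 4 * 0%:R by rewrite ex.
have /andP [l2 u2] := wb 2 isT.
have e3 : wfrac R f 3 = a 0 + a 1 * 3%:R + a 2 * 3%:R + a 3 * 1%:R + a 4 * 0%:R by rewrite ex.
have /andP [l3 u3] := wb 3 isT.
have e4 : wfrac R f 4 = a 0 + a 1 * 4%:R + a 2 * 6%:R + a 3 * 4%:R + a 4 * 1%:R by rewrite ex.
have /andP [l4 u4] := wb 4 isT.
have e5 : wfrac R f 5 = a 0 + a 1 * 5%:R + a 2 * 10%:R + a 3 * 10%:R + a 4 * 5%:R by rewrite ex.
have /andP [l5 u5] := wb 5 isT.
have e6 : wfrac R f 6 = a 0 + a 1 * 6%:R + a 2 * 15%:R + a 3 * 20%:R + a 4 * 15%:R by rewrite ex.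
have /andP [l6 u6] := wb 6 isT.
have e7 : wfrac R f 7 = a 0 + a 1 * 7%:R + a 2 * 21%:R + a 3 * 35%:R + a 4 * 35%:R by rewrite ex.
have /andP [l7 u7] := wb 7 isT.
have e8 : wfrac R f 8 = a 0 + a 1 * 8%:R + a 2 * 28%:R + a 3 * 56%:R + a 4 * 70%:R by rewrite ex.
have /andP [l8 u8] := wb 8 isT.
have e9 : wfrac R f 9 = a 0 + a 1 * 9%:R + a 2 * 36%:R + a 3 * 84%:R + a 4 * 126%:R by rewrite ex.
have /andP [l9 u9] := wb 9 isT.
have e10 : wfrac R f 10 = a 0 + a 1 * 10%:R + a 2 * 45%:R + a 3 * 120%:R + a 4 * 210%:R by rewrite ex.
have /andP [l10 u10] := wb 10 isT.
have ha0 : a 0 = 0 by lra.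
have ha1 : a 1 = 1 by lra.
have ha2 : a 2 = -1 by lra.
have ha3 : a 3 = 7/12 by lra.
have ha4 : a 4 = -(1/6) by lra.
have d4 : (4 <= d)%N.
  rewrite leqNgt; apply/negP => hd3.
  have : a 4 = 0.
    by rewrite /a big1 ?mul0r // => S /eqP hS; apply: cS0; rewrite hS.
  rewrite ha4 => /eqP; rewrite oppr_eq0 mul1r invr_eq0 pnatr_eq0 //.
have hpt : forall k : 'I_11, (ptilde R).[(k : nat)%:R] = wfrac R f k.
  have p0 : (ptilde R).[0%:R] = wfrac R f 0.
  rewrite e0 ha0 ha1 ha2 ha3 ha4 /ptilde !(hornerD, hornerN, hornerZ, hornerXn, hornerX); lra.
  have p1 : (ptilde R).[1%:R] = wfrac R f 1 by rewrite e1 ha0 ha1 ha2 ha3 ha4 /ptilde !(hornerD, hornerN, hornerZ, hornerXn, hornerX); lra.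
  have p2 : (ptilde R).[2%:R] = wfrac R f 2 by rewrite e2 ha0 ha1 ha2 ha3 ha4 /ptilde !(hornerD, hornerN, hornerZ, hornerXn, hornerX); lra.
  have p3 : (ptilde R).[3%:R] = wfrac R f 3 by rewrite e3 ha0 ha1 ha2 ha3 ha4 /ptilde !(hornerD, hornerN, hornerZ, hornerXn, hornerX); lra.
  have p4 : (ptilde R).[4%:R] = wfrac R f 4 by rewrite e4 ha0 ha1 ha2 ha3 ha4 /ptilde !(hornerD, hornerN, hornerZ, hornerXn, hornerX); lra.
  have p5 : (ptilde R).[5%:R] = wfrac R f 5 by rewrite e5 ha0 ha1 ha2 ha3 ha4 /ptilde !(hornerD, hornerN, hornerZ, hornerXn, hornerX); lra.
  have p6 : (ptilde R).[6%:R] = wfrac R f 6 by rewrite e6 ha0 ha1 ha2 ha3 ha4 /ptilde !(hornerD, hornerN, hornerZ, hornerXn, hornerX); lra.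
  have p7 : (ptilde R).[7%:R] = wfrac R f 7 by rewrite e7 ha0 ha1 ha2 ha3 ha4 /ptilde !(hornerD, hornerN, hornerZ, hornerXn, hornerX); lra.
  have p8 : (ptilde R).[8%:R] = wfrac R f 8 by rewrite e8 ha0 ha1 ha2 ha3 ha4 /ptilde !(hornerD, hornerN, hornerZ, hornerXn, hornerX); lra.
  have p9 : (ptilde R).[9%:R] = wfrac R f 9 by rewrite e9 ha0 ha1 ha2 ha3 ha4 /ptilde !(hornerD, hornerN, hornerZ, hornerXn, hornerX); lra.
  have p10 : (ptilde R).[10%:R] = wfrac R f 10 by rewrite e10 ha0 ha1 ha2 ha3 ha4 /ptilde !(hornerD, hornerN, hornerZ, hornerXn, hornerX); lra.
  move=> [k hk] /=; do 11?[case: k hk => [|k] hk; first done]. by [].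
split; first by split => //; apply: leq_trans (size_pt R) _.
move=> p [hsp hpk].
apply/eqP; rewrite -subr_eq0; apply/eqP.
apply: (@roots_geq_poly_eq0 _ _ [seq i%:R | i <- iota 0 5]).
- apply/allP => x /mapP [i]; rewrite mem_iota => /andP [_ hi] ->.
  have hi' : (i < 11)%N by apply: leq_trans hi _.
  have := hpk (inord i); have := hpt (inord i); rewrite inordK // => h1 h2.
  by rewrite /root hornerD hornerN h1 h2 subrr.
- by rewrite map_inj_uniq ?iota_uniq // => m n /eqP; rewrite eqr_nat => /eqP.
- apply: leq_trans (size_polyD _ _) _.
  rewrite size_polyN geq_max (leq_trans (size_pt R)) // andbT; apply: leq_trans hsp _; exact: hd4.
Qed.
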